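(* Let $T=(V,E)$ be a tree rooted at $o$ with edge lengths $\ell:E\to\mathbb{R}_{>0}$. Let $X_1,X_2,X_3,X_4\subseteq V$ and $e\in E\cup V$. Then $\mathrm{mst}_e(X_1\cup X_2)\le \mathrm{mst}_e(X_1)+\mathrm{mst}_e(X_2)$, $\mathrm{mst}_e(X_2)+\mathrm{mst}_e(X_1\cup X_2\cup X_3)\le \mathrm{mst}_e(X_1\cup X_2)+\mathrm{mst}_e(X_2\cup X_3)$, and $\mathrm{mst}_e(X_1\cup X_2\cup X_3)+\mathrm{mst}_e(X_2\cup X_3\cup X_4)\le \mathrm{mst}_e(X_1\cup X_2)+\mathrm{mst}_e(X_2\cup X_3)+\mathrm{mst}_e(X_3\cup X_4)$.
   Context: For $v\in V$, $V_v$ is the set of descendants of $v$ in $T$ (including $v$); for an edge $e=(u,v)$ with $v$ the child, $V_e=V_v$. For $X\subseteq V$, $\mathrm{mst}(X)$ is the total length of the minimal subtree of $T$ containing $X\cup\{o\}$ (so $\mathrm{mst}(\emptyset)=0$), and for $e\in E\cup V$, $\mathrm{mst}_e(X)=\mathrm{mst}(V_e\cap X)$. *)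

(* Defs.v *)
From mathcomp Require Import all_boot all_order all_algebra.
Set Implicit Arguments. Unset Strict Implicit. Unset Printing Implicit Defensive.
Import Order.TTheory GRing.Theory Num.Theory.
Local Open Scope ring_scope.

(* A finite tree T = (V,E) rooted at o, given by its parent map par :
   par o = o and every vertex reaches o by iterating par.  The edge set is
   E = { (par v, v) | v <> o }; an edge is identified with its child v. *)
Definition rooted_tree (V : finType) (o : V) (par : V -> V) : Prop :=
  par o = o /\ forall v : V, connect (frel par) v o.

Definition edge (V : finType) (o : V) := {v : V | v != o}.

Definition desc (V : finType) (par : V -> V) (v : V) : {set V} :=
  [set u | connect (frel par) u v].

(* V_e for e in E ∪ V (inl = vertex, inr = edge (par v, v) with V_e = V_v) *)
Definition Vsub (V : finType) (o : V) (par : V -> V)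
  (e : (V + edge o)%type) : {set V} :=
  match e with inl v => desc par v | inr ev => desc par (val ev) end.

(* mst X : total length of the minimal subtree containing X ∪ {o}, i.e. of
   the union of the root paths of the x in X.  The edge (par v, v), v <> o,
   lies on it iff v is an ancestor-or-self of some x in X.  len v is the
   length of the edge (par v, v). *)
Definition mst (R : realFieldType) (V : finType) (o : V) (par : V -> V)
  (len : V -> R) (X : {set V}) : R :=
  \sum_(v : V | (v != o) && [exists x in X, connect (frel par) x v]) len v.

Arguments Vsub {V} o par e.
Arguments mst {R V} o par len X.

Definition mst_e (R : realFieldType) (V : finType) (o : V) (par : V -> V)
  (len : V -> R) (e : (V + edge o)%type) (X : {set V}) : R :=
  mst o par len (Vsub o par e :&: X).

Arguments mst_e {R V} o par len e X.

(* Main.v *)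
Require Import Defs.
From mathcomp Require Import all_boot all_order all_algebra.
From mathcomp Require Import lra.
Import Order.TTheory GRing.Theory Num.Theory.
Local Open Scope ring_scope.

Section H.
Variables (R : realFieldType) (V : finType) (o : V) (par : V -> V) (len : V -> R).
Hypothesis Hlen : forall v : V, v != o -> 0 < len v.
Variable S : {set V}.

Definition I (X : {set V}) v := [exists x in S :&: X, connect (frel par) x v].
Definition wt (b : bool) v : R := if (v != o) && b then len v else 0.

Lemma mstE X : mst o par len (S :&: X) = \sum_v wt (I X v) v.
Proof. by rewrite /mst big_mkcond. Qed.

Lemma IU A B v : I (A :|: B) v = I A v || I B v.
Proof.
rewrite /I setIUr; apply/existsP/orP.
  by case=> x /andP[]; rewrite inE => /orP[h1|h1] h2; [left|right];
     apply/existsP; exists x; rewrite h1.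
by case=> /existsP[x /andP[h1 h2]]; exists x; rewrite inE h1 ?orbT.
Qed.

Lemma wt0 v : 0 <= len v \/ v == o.
Proof. by case: (eqVneq v o) => h; [right|left; apply/ltW/Hlen]. Qed.
End H.

Theorem lemma3p1 (R : realFieldType) (V : finType) (o : V) (par : V -> V)
  (len : V -> R) (Htree : rooted_tree o par)
  (Hlen : forall v : V, v != o -> 0 < len v)
  (X1 X2 X3 X4 : {set V}) (e : (V + edge o)%type) :
  [/\ mst_e o par len e (X1 :|: X2)
        <= mst_e o par len e X1 + mst_e o par len e X2,
      mst_e o par len e X2 + mst_e o par len e (X1 :|: X2 :|: X3)
        <= mst_e o par len e (X1 :|: X2) + mst_e o par len e (X2 :|: X3)
    & mst_e o par len e (X1 :|: X2 :|: X3) + mst_e o par len e (X2 :|: X3 :|: X4)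
        <= mst_e o par len e (X1 :|: X2) + mst_e o par len e (X2 :|: X3)
           + mst_e o par len e (X3 :|: X4)].
Proof.
rewrite /mst_e !mstE -!big_split /=.
split; apply: ler_sum => v _; rewrite !IU /wt;
  case: (@wt0 R V o len Hlen v) => [h|/eqP->]; rewrite ?eqxx /= ?addr0 ?lexx //;
  case: (v != o) => /=; rewrite ?addr0 ?lexx //;
  case: (@I V par (Vsub o par e) X1 v); case: (@I V par (Vsub o par e) X2 v); case: (@I V par (Vsub o par e) X3 v); case: (@I V par (Vsub o par e) X4 v);
  rewrite /= ?addr0 ?add0r; lra.
Qed.
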